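(* Let $\omega\in\mathbb{F}_{q^n}$ and let $\mathbb{F}_{q^k}=\mathbb{F}_q(\omega)$ be the smallest subfield of $\mathbb{F}_{q^n}$ containing $\omega$. Then the smallest subplane (over a subfield $\mathbb{F}_{q^j}$, $j\mid n$) of $\mathrm{PG}(2,q^n)$ that is secant to $l_\infty$ and contains $\pi_{\omega,0}$ is an $\mathbb{F}_{q^k}$-subplane.
   Context: Points of $\mathrm{PG}(2,q^n)$ are written $(a,b,c)_{\mathbb{F}_{q^n}}$; $l_\infty$ is the line $c=0$. For $j\mid n$, an $\mathbb{F}_{q^j}$-subplane is a set $\{(su+tv+wz)_{\mathbb{F}_{q^n}}:(s,t,w)\in\mathbb{F}_{q^j}^3\setminus\{0\}\}$ for $\mathbb{F}_{q^n}$-independent $u,v,z\in\mathbb{F}_{q^n}^3$; it is secant to $l_\infty$ if it meets $l_\infty$ in $q^j+1$ points. For $\omega\in\mathbb{F}_{q^n}$, $\pi_{\omega,0}=\{(s,u,u\omega+t)_{\mathbb{F}_{q^n}}:(s,t,u)\in\mathbb{F}_q^3\setminus\{0\}\}$. *)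

(* Defs.v *)
From HB Require Import structures.
From mathcomp Require Import all_boot all_order all_algebra all_field.
Set Implicit Arguments. Unset Strict Implicit. Unset Printing Implicit Defensive.
Import GRing.Theory.
Local Open Scope ring_scope.

Section PG2.
Variable F : finFieldType.

(* The subfield F_{q^j} of F (meaningful for j | n when #|F| = q^n). *)
Definition Fsub (q j : nat) : {set F} := [set x : F | x ^+ (q ^ j)%N == x].

Definition vec3 (a b c : F) : 'rV[F]_3 := \row_(i < 3) nth 0 [:: a; b; c] i.

Definition pt (v : 'rV[F]_3) : {set 'rV[F]_3} := [set a *: v | a in [set: F]].

Definition linf : {set {set 'rV[F]_3}} :=
  [set pt v | v in [set v : 'rV[F]_3 | (v != 0) && (v ord0 (@Ordinal 3 2 isT) == 0)]].

Definition triples (q j : nat) : {set F * F * F} :=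
  [set x in setX (setX (Fsub q j) (Fsub q j)) (Fsub q j) | x != (0, 0, 0)].

Definition subplane_of (q j : nat) (u v z : 'rV[F]_3) : {set {set 'rV[F]_3}} :=
  [set pt (x.1.1 *: u + x.1.2 *: v + x.2 *: z) | x in triples q j].

Definition is_subplane (q j : nat) (S : {set {set 'rV[F]_3}}) : Prop :=
  exists u v z : 'rV[F]_3,
    row_free (col_mx u (col_mx v z)) /\ S = subplane_of q j u v z.

Definition secant (q j : nat) (S : {set {set 'rV[F]_3}}) : Prop :=
  #|S :&: linf| = (q ^ j).+1%N.

Definition pi_omega0 (q : nat) (omega : F) : {set {set 'rV[F]_3}} :=
  [set pt (vec3 x.1.1 x.2 (x.2 * omega + x.1.2)) | x in triples q 1].

End PG2.

(* Main.v *)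
Require Import Defs.
From HB Require Import structures.
From mathcomp Require Import all_boot all_order all_algebra all_field all_fingroup all_solvable.
From mathcomp Require Import zify ring.
Set Implicit Arguments. Unset Strict Implicit. Unset Printing Implicit Defensive.
Import GRing.Theory.
Local Open Scope ring_scope.

Lemma dvd_pow_sub1 (a m : nat) : (0 < a)%N -> (a.-1 %| (a ^ m).-1)%N.
Proof.
move=> a0; elim: m => [|m IH]; first by rewrite expn0 dvdn0.
have h1: (0 < a ^ m)%N by rewrite expn_gt0 a0.
have -> : ((a ^ m.+1).-1 = a * (a ^ m).-1 + a.-1)%N.
  rewrite expnS; move: h1; move: (a ^ m)%N => b hb; nia.
by rewrite dvdn_add // dvdn_mull.
Qed.

Section Card.
Variable F : finFieldType.

Lemma Fsub_sub1 (q j : nat) (x : F) : x \in Fsub F q 1 -> x \in Fsub F q j.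
Proof.
rewrite !inE expn1 => /eqP Hx; apply/eqP; elim: j => [|j IH]; first by rewrite expn0 expr1.
by rewrite expnSr exprM IH.
Qed.

Lemma card_Fsub (q n j : nat) : (1 < q)%N -> #|F| = (q ^ n)%N -> (0 < j)%N -> (j %| n)%N ->
  #|Fsub F q j| = (q ^ j)%N.
Proof.
move=> q1 cF j0 jn.
set N1 := (#|F|).-1.
have F1 : (1 < #|F|)%N by exact: finNzRing_gt1.
have N1pos : (0 < N1)%N by rewrite /N1; lia.
have [g Hg] : exists g : F, N1.-primitive_root g.
  have := @has_prim_root F N1 (enum [set~ (0 : F)]) N1pos.
  have H1 : all N1.-unity_root (enum [set~ (0 : F)]).
    apply/allP => x; rewrite mem_enum !inE => x0.
    rewrite unity_rootE; apply/eqP; apply: (mulIf x0); rewrite mul1r -exprSr.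
    by rewrite /N1 prednK ?expf_card //; lia.
  move/(_ H1 (enum_uniq _)); rewrite -cardE cardsC1 leqnn => /(_ isT).
  by case/hasP=> g _ Hg; exists g.
set Q := (q ^ j)%N; set d := Q.-1.
have Q0 : (0 < Q)%N by rewrite expn_gt0; lia.
have dN : (d %| N1)%N.
  case/dvdnP: jn => m Hn; rewrite /N1 cF Hn mulnC expnM; apply: dvd_pow_sub1; exact: Q0.
have Q1 : (1 < Q)%N by rewrite /Q -(expn0 q) ltn_exp2l.
have d0 : (0 < d)%N by rewrite /d; lia.
have dQ : Q = d.+1 by rewrite /d prednK.
set e := (N1 %/ d)%N.
have ed : N1 = (e * d)%N by rewrite /e divnK.
have e0 : (0 < e)%N by move: N1pos; rewrite ed; case: (e).
set z := g ^+ e.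
have Hz : d.-primitive_root z.
  have := exp_prim_root Hg e.
  have -> : gcdn e N1 = e by apply/gcdn_idPl; rewrite ed dvdn_mulr.
  by rewrite ed mulKn.
have z0 : z != 0.
  apply/negP => /eqP z0; have := prim_expr_order Hz; rewrite z0 expr0n.
  by move: d0; case: (d) => // d' _ /eqP; rewrite eq_sym oner_eq0.
have -> : Fsub F q j = 0 |: [set z ^+ (val i) | i : 'I_d].
  apply/setP => x; rewrite !inE; apply/eqP/idP.
  - move=> Hx; have [->|x0] := eqVneq x 0; first by [].
    have : x ^+ d = 1.
      by apply: (mulIf x0); rewrite mul1r -exprSr -dQ Hx.
    case/(prim_rootP Hz) => i ->; apply/orP; right.
    by apply/imsetP; exists i.
  - case/orP => [/eqP ->|/imsetP [i _ ->]]; first by rewrite -/Q dQ expr0n.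
    by rewrite -/Q dQ exprSr exprAC (prim_expr_order Hz) expr1n mul1r.
rewrite cardsU1 card_imset ?card_ord.
  have -> : (0 : F) \notin [set z ^+ (val i) | i : 'I_d].
    by apply/imsetP => [[i _ /eqP]]; rewrite eq_sym expf_eq0 (negbTE z0) andbF.
  by rewrite dQ.
move=> i i' /eqP; rewrite (eq_prim_root_expr Hz) !modn_small ?ltn_ord //.
by move/eqP => h; apply: val_inj.
Qed.

Lemma frobD (q n j : nat) : (0 < n)%N -> #|F| = (q ^ n)%N ->
  forall x y : F, (x + y) ^+ (q ^ j) = x ^+ (q ^ j) + y ^+ (q ^ j).
Proof.
move=> n0 cF x y.
have [p pp pc] := finPcharP F.
have cp : #|F| = (p ^ logn p #|F|)%N by exact: (card_pprimeChar pc).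
have pq : p.-nat q.
  have : p.-nat (q ^ n)%N by rewrite -cF cp pnatX pnat_id.
  by rewrite pnatX; case: n n0 {cF} => // n' _; rewrite orbF.
apply: GRing.exprDn_pchar.
by rewrite (eq_pnat _ (GRing.pcharf_eq pc)) pnatX pq.
Qed.

Lemma frob_rmorph (q n j : nat) : (0 < n)%N -> #|F| = (q ^ n)%N ->
  {s : {rmorphism F -> F} | forall x, s x = x ^+ (q ^ j)}.
Proof.
move=> n0 cF.
pose f (x : F) := x ^+ (q ^ j).
have fA : zmod_morphism f.
  move=> x y; rewrite /f; apply: (addIr (y ^+ (q ^ j))).
  by rewrite -(frobD j n0 cF) subrK addrNK.
have fM : monoid_morphism f.
  by rewrite /f; split=> [|x y]; rewrite ?exprMn ?expr1n.
pose faM := GRing.isZmodMorphism.Build _ _ f fA.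
pose fmM := GRing.isMonoidMorphism.Build _ _ f fM.
pose fR : {rmorphism F -> F} := HB.pack f faM fmM.
by exists fR.
Qed.
End Card.
Section Geo.
Variable F : finFieldType.
Implicit Types (u v w z : 'rV[F]_3).

Lemma col3E u v z (i : 'I_(1 + (1 + 1))) k :
  col_mx u (col_mx v z) i k = nth 0 [:: u 0 k; v 0 k; z 0 k] i.
Proof.
case: i => [[|[|[|i]]] Hi] //.
- have -> : Ordinal Hi = lshift (1 + 1) ord0 by apply/val_inj.
  by rewrite col_mxEu [ord0]ord1.
- have -> : Ordinal Hi = rshift 1 (lshift 1 ord0) by apply/val_inj.
  by rewrite col_mxEd col_mxEu [ord0]ord1.
- have -> : Ordinal Hi = rshift 1 (rshift 1 ord0) by apply/val_inj.
  by rewrite col_mxEd col_mxEd [ord0]ord1.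
Qed.

Lemma vec3E (a b c : F) (i : 'I_3) : vec3 a b c 0 i = nth 0 [:: a; b; c] i.
Proof. by rewrite mxE. Qed.

Lemma vec3_eq0 (a b c : F) : vec3 a b c = 0 -> [/\ a = 0, b = 0 & c = 0].
Proof.
move=> h; have e i : vec3 a b c 0 i = 0 by rewrite h mxE.
by split; [move: (e ord0) | move: (e (@Ordinal 3 1 isT)) | move: (e (@Ordinal 3 2 isT))];
  rewrite vec3E.
Qed.

Lemma comb_vec3 (a b c : F) :
  a *: vec3 1 0 0 + b *: vec3 0 1 0 + c *: vec3 0 0 1 = vec3 a b c.
Proof.
apply/rowP => i; rewrite !mxE.
by case: i => [[|[|[|i]]] Hi] //=; rewrite ?mulr0 ?mulr1 ?addr0 ?add0r.
Qed.

Lemma pt_mem v : v \in pt v.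
Proof. by apply/imsetP; exists 1; rewrite ?inE ?scale1r. Qed.

Lemma pt_eq v w : pt v = pt w -> exists a, v = a *: w.
Proof. by move=> h; have := pt_mem v; rewrite h => /imsetP[a _ ->]; exists a. Qed.

Lemma pt_scale (a : F) v : a != 0 -> pt (a *: v) = pt v.
Proof.
move=> a0; apply/setP => x; apply/imsetP/imsetP => [[b _ ->]|[b _ ->]].
  by exists (b * a); rewrite ?inE ?scalerA.
by exists (b / a); rewrite ?inE ?scalerA ?divfK.
Qed.

Lemma pt_linf v : v != 0 -> (pt v \in linf F) = (v 0 (@Ordinal 3 2 isT) == 0).
Proof.
move=> v0; apply/imsetP/idP => [[w] | h].
  rewrite inE => /andP[_ /eqP w2] /pt_eq [a ->].
  by rewrite mxE w2 mulr0.
by exists v; rewrite // inE v0 h.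
Qed.


Lemma mul_vec3 (a b c : F) u v z :
  (vec3 a b c : 'M_(1, 1 + (1 + 1))) *m col_mx u (col_mx v z) = a *: u + b *: v + c *: z.
Proof.
apply/rowP => k; rewrite !mxE !big_ord_recl big_ord0 !col3E !vec3E /=.
by rewrite addr0 addrA.
Qed.

Lemma rowfree_indep u v z (a b c : F) : row_free (col_mx u (col_mx v z)) ->
  a *: u + b *: v + c *: z = 0 -> [/\ a = 0, b = 0 & c = 0].
Proof.
move=> rf h; apply: vec3_eq0.
apply: (row_free_inj rf); rewrite mul_vec3 h mul0mx //.
Qed.

Lemma rowfree_f (om : F) : row_free (col_mx (vec3 1 0 0) (col_mx (vec3 0 1 om) (vec3 0 0 1))).
Proof.
apply/row_freeP.
exists (\matrix_(i < 3, j < 1 + (1 + 1)) nth 0 (nth [::] [:: [:: 1; 0; 0]; [:: 0; 1; -om]; [:: 0; 0; 1]] i) j).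
apply/matrixP => i j; rewrite !mxE !big_ord_recl big_ord0 !col3E /= !mxE /=.
case: i => [[|[|[|i]]] Hi] //; case: j => [[|[|[|j]]] Hj] //=;
  rewrite ?mul0r ?mulr0 ?mul1r ?mulr1 ?addr0 ?add0r ?mulrN ?addNr //.
Qed.

Lemma vec3Z (a x y w : F) : a *: vec3 x y w = vec3 (a * x) (a * y) (a * w).
Proof. by apply/rowP => i; rewrite !mxE; case: i => [[|[|[|i]]] Hi]. Qed.

Lemma vec3D (x y w x' y' w' : F) : vec3 x y w + vec3 x' y' w' = vec3 (x + x') (y + y') (w + w').
Proof. by apply/rowP => i; rewrite !mxE; case: i => [[|[|[|i]]] Hi]. Qed.

Lemma vec3_eta (y : 'rV[F]_3) : y = vec3 (y 0 0) (y 0 1) (y 0 (@Ordinal 3 2 isT)).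
Proof.
apply/rowP => i; rewrite !mxE; case: i => [[|[|[|i]]] Hi] //=; congr (y 0 _); exact: val_inj.
Qed.

Lemma map_vec3 (s : {rmorphism F -> F}) (x y w : F) : map_mx s (vec3 x y w) = vec3 (s x) (s y) (s w).
Proof. by apply/rowP => i; rewrite !mxE; case: i => [[|[|[|i]]] Hi] //=; rewrite rmorph0. Qed.

Lemma combf (om a b c : F) :
  a *: vec3 1 0 0 + b *: vec3 0 1 om + c *: vec3 0 0 1 = vec3 a b (b * om + c).
Proof.
rewrite !vec3Z !vec3D; congr vec3; rewrite ?mulr0 ?mulr1 ?addr0 ?add0r //.
Qed.

Lemma triplesP (q j : nat) (a b c : F) :
  (((a, b), c) \in triples F q j) =
  [&& a \in Fsub F q j, b \in Fsub F q j, c \in Fsub F q j & ((a != 0) || (b != 0) || (c != 0))].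
Proof.
rewrite /triples !inE /= -!andbA; congr [&& _, _, _ & _].
by rewrite !xpair_eqE !negb_and.
Qed.

Lemma sub3 (V : zmodType) (a b c a' b' c' : V) :
  (a - a') + (b - b') + (c - c') = (a + b + c) - (a' + b' + c').
Proof. by rewrite (addrACA a) (addrACA (a + b)) !opprD. Qed.

Section Min.
Variables (q j : nat) (s : {rmorphism F -> F}).
Hypothesis Hs : forall x, s x = x ^+ (q ^ j).
Variables (u v z : 'rV[F]_3).
Hypothesis rf : row_free (col_mx u (col_mx v z)).
Local Notation M := (col_mx u (col_mx v z)).
Local Notation "'mM' y" := ((y : 'M_(1, 1 + (1 + 1))) *m M) (at level 10, y at level 8).

Lemma Kfix x : (x \in Fsub F q j) = (s x == x).
Proof. by rewrite inE Hs. Qed.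

Lemma memT (y : 'rV[F]_3) : map_mx s y = y -> y != 0 -> pt (mM y) \in subplane_of q j u v z.
Proof.
move=> fy y0; apply/imsetP; exists ((y 0 0, y 0 1), y 0 (@Ordinal 3 2 isT)).
  rewrite triplesP !Kfix.
  have e i : s (y 0 i) = y 0 i by rewrite -{2}fy mxE.
  rewrite !e !eqxx /=.
  apply: contraNT y0; rewrite !negb_or !negbK => /andP[/andP[/eqP a /eqP b] /eqP c].
  by rewrite [y]vec3_eta a b c; apply/eqP/rowP => i; rewrite !mxE; case: i => [[|[|[|i]]] Hi].
by rewrite /= -mul_vec3 -vec3_eta.
Qed.

Lemma inT P : P \in subplane_of q j u v z ->
  exists y : 'rV[F]_3, [/\ map_mx s y = y, y != 0 & P = pt (mM y)].
Proof.
case/imsetP => [[[a b] c]]; rewrite triplesP !Kfix => /and4P[/eqP sa /eqP sb /eqP sc nz] ->.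
exists (vec3 a b c); split.
- by rewrite map_vec3 sa sb sc.
- apply: contraTneq nz => /vec3_eq0 [-> -> ->]; by rewrite eqxx.
- by rewrite mul_vec3.
Qed.

Lemma inTw w : pt w \in subplane_of q j u v z -> w != 0 ->
  exists l (y : 'rV[F]_3), [/\ l != 0, map_mx s y = y, y != 0 & w = l *: mM y].
Proof.
move=> /inT [y [fy y0 e]] w0; have [l el] := pt_eq e.
exists l, y; split => //; apply: contraNneq w0 => l0; by rewrite el l0 scale0r.
Qed.


Variable om : F.
Hypothesis q0 : (0 < q)%N.
Hypothesis piT : pi_omega0 q om \subset subplane_of q j u v z.

Lemma in_pi (a b c : F) : a \in Fsub F q 1 -> b \in Fsub F q 1 -> c \in Fsub F q 1 ->
  (a != 0) || (b != 0) || (c != 0) ->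
  pt (vec3 a c (c * om + b)) \in subplane_of q j u v z.
Proof.
move=> ha hb hc nz; apply: (subsetP piT); apply/imsetP; exists ((a, b), c) => //.
by rewrite triplesP ha hb hc.
Qed.

Lemma F01 : ((0 : F) \in Fsub F q 1) && ((1 : F) \in Fsub F q 1).
Proof. by rewrite !inE expn1 expr1n expr0n eqxx andbT; move: q0; case: (q). Qed.

Lemma frame : exists l1 l2 l3 (y1 y2 y3 : 'rV[F]_3),
  [/\ l1 != 0, s (l2 / l1) = l2 / l1, s (l3 / l1) = l3 / l1, l2 != 0 & l3 != 0] /\
  [/\ map_mx s y1 = y1, map_mx s y2 = y2 & map_mx s y3 = y3] /\
  [/\ vec3 1 0 0 = l1 *: (mM y1), vec3 0 1 om = l2 *: (mM y2) & vec3 0 0 1 = l3 *: (mM y3)] /\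
  (forall a1 a2 a3, a1 *: y1 + a2 *: y2 + a3 *: y3 = 0 -> [/\ a1 = 0, a2 = 0 & a3 = 0]).
Proof.
have /andP[h0 h1] := F01.
have nz (a b c : F) : a != 0 -> vec3 a b c != 0.
  by move=> a0; apply/negP => /eqP /vec3_eq0 [a00 _ _]; rewrite a00 eqxx in a0.
have nz2 (a b c : F) : b != 0 -> vec3 a b c != 0.
  by move=> a0; apply/negP => /eqP /vec3_eq0 [_ a00 _]; rewrite a00 eqxx in a0.
have nz3 (a b c : F) : c != 0 -> vec3 a b c != 0.
  by move=> a0; apply/negP => /eqP /vec3_eq0 [_ _ a00]; rewrite a00 eqxx in a0.
have p1 : pt (vec3 1 0 0) \in subplane_of q j u v z.
  by have := in_pi h1 h0 h0; rewrite oner_eq0 /= mul0r addr0; apply.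
have p2 : pt (vec3 0 1 om) \in subplane_of q j u v z.
  by have := in_pi h0 h0 h1; rewrite oner_eq0 /= mul1r addr0 orbT; apply.
have p3 : pt (vec3 0 0 1) \in subplane_of q j u v z.
  by have := in_pi h0 h1 h0; rewrite oner_eq0 /= mul0r add0r orbT; apply.
have p4 : pt (vec3 1 1 (om + 1)) \in subplane_of q j u v z.
  by have := in_pi h1 h1 h1; rewrite oner_eq0 /= mul1r; apply.
have [l1 [y1 [l10 f1 _ e1]]] := inTw p1 (nz _ _ _ (oner_neq0 _)).
have [l2 [y2 [l20 f2 _ e2]]] := inTw p2 (nz2 _ _ _ (oner_neq0 _)).
have [l3 [y3 [l30 f3 _ e3]]] := inTw p3 (nz3 _ _ _ (oner_neq0 _)).
have [l4 [y4 [l40 f4 _ e4]]] := inTw p4 (nz _ _ _ (oner_neq0 _)).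
have indep a1 a2 a3 : a1 *: y1 + a2 *: y2 + a3 *: y3 = 0 -> [/\ a1 = 0, a2 = 0 & a3 = 0].
  move=> h.
  have : (a1 / l1) *: vec3 1 0 0 + (a2 / l2) *: vec3 0 1 om + (a3 / l3) *: vec3 0 0 1 = 0.
    rewrite e1 e2 e3 !scalerA !divfK // !scalemxAl -!mulmxDl h mul0mx //.
  rewrite combf => /vec3_eq0 [b1 b2 b3].
  have a10 : a1 = 0 by move/eqP: b1; rewrite mulf_eq0 invr_eq0 (negbTE l10) orbF => /eqP.
  have a20 : a2 = 0 by move/eqP: b2; rewrite mulf_eq0 invr_eq0 (negbTE l20) orbF => /eqP.
  move: b3; rewrite a20 mul0r mul0r add0r => /eqP.
  by rewrite mulf_eq0 invr_eq0 (negbTE l30) orbF => /eqP.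
have E : l4 *: y4 = l1 *: y1 + l2 *: y2 + l3 *: y3.
  apply: (row_free_inj rf).
  rewrite -!scalemxAl !mulmxDl -!scalemxAl -e1 -e2 -e3 -e4 !vec3D.
  by congr vec3; rewrite ?addr0 ?add0r.
have E' : s l4 *: y4 = s l1 *: y1 + s l2 *: y2 + s l3 *: y3.
  by have := congr1 (map_mx s) E; rewrite !map_mxD !map_mxZ f1 f2 f3 f4.
set mu := s l4 / l4.
have smu : mu * l4 = s l4 by rewrite /mu divfK.
have mu0 : mu != 0 by rewrite /mu mulf_neq0 ?invr_neq0 ?fmorph_eq0.
have [d1 d2 d3] : [/\ s l1 - mu * l1 = 0, s l2 - mu * l2 = 0 & s l3 - mu * l3 = 0].
  apply: indep.
  rewrite !scalerBl -!scalerA !(scalerA (s l4)) -/mu sub3 -!scalerDr -E -E' scalerA smu.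
  by rewrite subrr.
move/eqP: d1; rewrite subr_eq0 => /eqP d1.
move/eqP: d2; rewrite subr_eq0 => /eqP d2.
move/eqP: d3; rewrite subr_eq0 => /eqP d3.
exists l1, l2, l3, y1, y2, y3; split; [|split; [|split]] => //.
by split => //; rewrite fmorph_div ?d1 ?d2 ?d3 invfM mulrACA divff // mul1r.
Qed.


Lemma S_sub (a b c : F) : s a = a -> s b = b -> s c = c -> (a != 0) || (b != 0) || (c != 0) ->
  pt (vec3 a b (b * om + c)) \in subplane_of q j u v z.
Proof.
move=> sa sb sc nz.
have [l1 [l2 [l3 [y1 [y2 [y3 [[l10 c2 c3 l20 l30] [[f1 f2 f3] [[e1 e2 e3] indep]]]]]]]]] := frame.
set y := a *: y1 + (b * (l2 / l1)) *: y2 + (c * (l3 / l1)) *: y3.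
have ey : vec3 a b (b * om + c) = l1 *: (mM y).
  rewrite -combf e1 e2 e3 /y !mulmxDl -!scalemxAl !scalerDr !scalerA.
  by congr (_ *: _ + _ *: _ + _ *: _); field.
have fy : map_mx s y = y.
  by rewrite /y !map_mxD !map_mxZ f1 f2 f3 (rmorphM s b) (rmorphM s c) sa sb sc c2 c3.
have y0 : y != 0.
  apply: contraTneq nz => y0; move: ey; rewrite y0 mul0mx scaler0 => /vec3_eq0 [-> ->].
  by rewrite mul0r add0r => ->; rewrite eqxx.
rewrite ey pt_scale //; exact: memT.
Qed.

Lemma om_fix : secant q j (subplane_of q j u v z) -> s om = om.
Proof.
move=> sec; apply/eqP; apply/negPn/negP => som.
have [l1 [l2 [l3 [y1 [y2 [y3 [[l10 c2 c3 l20 l30] [[f1 f2 f3] [[e1 e2 e3] indep]]]]]]]]] := frame.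
have sub : subplane_of q j u v z :&: linf F \subset [set pt (vec3 1 0 0)].
  apply/subsetP => P; rewrite inE => /andP[PT Pl].
  have [y [fy y0 eP]] := inT PT.
  have w0 : mM y != 0.
    by apply: contraNneq y0 => h; apply/eqP; apply: (row_free_inj rf); rewrite h mul0mx.
  have w2 : (mM y) 0 (@Ordinal 3 2 isT) = 0 by move: Pl; rewrite eP pt_linf // => /eqP.
  set a := (mM y) 0 0; set b := (mM y) 0 1.
  have ew : mM y = a *: vec3 1 0 0 + b *: vec3 0 1 om + (- (b * om)) *: vec3 0 0 1.
    by rewrite combf addrN [LHS]vec3_eta w2.
  rewrite e1 e2 e3 !scalerA in ew.
  have ey : y = (a * l1) *: y1 + (b * l2) *: y2 + (- (b * om) * l3) *: y3.
    by apply: (row_free_inj rf); rewrite !mulmxDl -!scalemxAl.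
  have ey' := ey; rewrite -{1}fy {1}ey !map_mxD !map_mxZ f1 f2 f3 in ey'.
  have [_ h2 h3] : [/\ s (a * l1) - a * l1 = 0, s (b * l2) - b * l2 = 0 &
                      s (- (b * om) * l3) - (- (b * om) * l3) = 0].
    apply: indep; rewrite !scalerBl sub3 -ey' subrr //.
  move/eqP: h2; rewrite subr_eq0 => /eqP h2.
  move/eqP: h3; rewrite subr_eq0 => /eqP h3.
  have [b0|b0] := eqVneq b 0.
    rewrite eP inE; apply/eqP.
    have a0 : a != 0.
      by apply: contraNneq w0 => a0; move: ew; rewrite a0 b0 !(mul0r, oppr0, scale0r, addr0, add0r) => /eqP.
    apply: etrans (_ : pt (mM y) = _); first by []. by rewrite ew b0 !(mul0r, oppr0, scale0r, addr0, add0r) -scalerA -e1 pt_scale.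
  set B := b * l1.
  have B0 : B != 0 by rewrite mulf_neq0.
  have hc2 : l2 / l1 != 0 by rewrite mulf_neq0 ?invr_eq0.
  have hc3 : l3 / l1 != 0 by rewrite mulf_neq0 ?invr_eq0.
  have sB : s B = B.
    have : s (B * (l2 / l1)) = B * (l2 / l1).
      have -> : B * (l2 / l1) = b * l2 by rewrite /B; field.
      exact: h2.
    by rewrite rmorphM c2 => /(mulIf hc2).
  have : s (- (B * (l3 / l1)) * om) = - (B * (l3 / l1)) * om.
    have -> : - (B * (l3 / l1)) * om = - (b * om) * l3 by rewrite /B; field.
    exact: h3.
  rewrite rmorphM rmorphN rmorphM sB c3 => /mulrI; rewrite unitfE oppr_eq0 mulf_neq0 //.
  by move=> /(_ isT) /eqP; rewrite (negbTE som).
have := subset_leq_card sub; rewrite cards1 sec ltnS.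
by rewrite leqn0 expn_eq0; case: (q) q0.
Qed.

End Min.
End Geo.

Lemma vec3_inj (F : finFieldType) (a b c a' b' c' : F) :
  vec3 a b c = vec3 a' b' c' -> [/\ a = a', b = b' & c = c'].
Proof.
move=> h; have e i : vec3 a b c 0 i = vec3 a' b' c' 0 i by rewrite h.
by split; [move: (e ord0) | move: (e (@Ordinal 3 1 isT)) | move: (e (@Ordinal 3 2 isT))];
  rewrite !vec3E.
Qed.

Unset Implicit Arguments.

Theorem lemma3p3 (F : finFieldType) (q n k : nat) (omega : F) :
  (1 < q)%N -> (0 < n)%N -> #|F| = (q ^ n)%N ->
  (* F_{q^k} = F_q(omega): the smallest subfield F_{q^j} (j | n) containing omega *)
  (k %| n)%N -> omega \in Fsub F q k ->
  (forall j : nat, (j %| n)%N -> omega \in Fsub F q j -> Fsub F q k \subset Fsub F q j) ->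
  (* the smallest secant subplane containing pi_{omega,0} is an F_{q^k}-subplane *)
  exists S : {set {set 'rV[F]_3}},
    [/\ is_subplane q k S, secant q k S, pi_omega0 q omega \subset S &
      forall (j : nat) (T : {set {set 'rV[F]_3}}),
        (j %| n)%N -> is_subplane q j T -> secant q j T ->
        pi_omega0 q omega \subset T -> S \subset T].
Proof.
move=> q1 n0 cF kn omk hmin.
have q0 : (0 < q)%N by lia.
have k0 : (0 < k)%N by move: kn n0; case: (k) => //; rewrite dvd0n => /eqP ->.
have [sk Hsk] := frob_rmorph k n0 cF.
have Kk x : (x \in Fsub F q k) = (sk x == x) by rewrite inE Hsk.
exists (subplane_of q k (vec3 1 0 0) (vec3 0 1 omega) (vec3 0 0 1)); split.
- by exists (vec3 1 0 0), (vec3 0 1 omega), (vec3 0 0 1); split; first exact: rowfree_f.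
- rewrite /secant.
  have fom : sk omega = omega by apply/eqP; rewrite -Kk.
  have ne0 (a b c : F) : (a != 0) || (b != 0) -> vec3 a b c != 0.
    by case/orP => h; apply/negP => /eqP /vec3_eq0 [ha hb _]; rewrite ?ha ?hb eqxx in h.
  have -> : subplane_of q k (vec3 1 0 0) (vec3 0 1 omega) (vec3 0 0 1) :&: linf F =
            pt (vec3 0 1 0) |: [set pt (vec3 1 b 0) | b in Fsub F q k].
    apply/setP => P; rewrite !inE; apply/idP/idP.
    + case/andP => /imsetP [[[a b] c]]; rewrite triplesP => /and4P[ha hb hc nz] -> hl.
      rewrite /= combf in hl *.
      have w0 : vec3 a b (b * omega + c) != 0.
        apply/negP => /eqP/vec3_eq0 [a0 b0 e]; rewrite b0 mul0r add0r in e.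
        by rewrite a0 b0 e eqxx in nz.
      move: hl; rewrite pt_linf // vec3E /= => /eqP e; rewrite e.
      have [a0|a0] := eqVneq a 0.
        have b0 : b != 0.
          apply: contraNneq w0 => b0; rewrite e a0 b0; apply/eqP/rowP => i.
          by rewrite !mxE; case: i => [[|[|[|i]]] Hi].
        have -> : vec3 a b 0 = b *: vec3 0 1 0 by rewrite vec3Z a0 mulr0 mulr1.
        by rewrite pt_scale ?eqxx.
      apply/orP; right; apply/imsetP; exists (b / a).
        by rewrite Kk fmorph_div; move: ha hb; rewrite !Kk => /eqP -> /eqP ->.
      by rewrite -[RHS](pt_scale _ a0) vec3Z mulr1 mulr0 (mulrC a (b / a)) divfK.
    + case/orP => [/eqP -> | /imsetP [b hb ->]].
        rewrite pt_linf ?ne0 ?oner_eq0 ?orbT // vec3E /= eqxx andbT.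
        apply/imsetP; exists ((0, 1), - omega); rewrite /= ?combf ?mul1r ?subrr //.
        by rewrite triplesP !Kk rmorph0 rmorph1 rmorphN fom !eqxx oner_eq0 orbT.
      rewrite pt_linf ?ne0 ?oner_eq0 // vec3E /= eqxx andbT.
      apply/imsetP; exists ((1, b), - (b * omega)); rewrite /= ?combf ?subrr //.
      move: hb; rewrite triplesP !Kk rmorph1 rmorphN rmorphM fom oner_eq0 => /eqP ->.
      by rewrite !eqxx.
  rewrite cardsU1 card_imset ?(card_Fsub q1 cF k0 kn).
    have -> : pt (vec3 0 1 0) \notin [set pt (vec3 1 b 0) | b in Fsub F q k].
      apply/imsetP => [[b _ /pt_eq [a]]]; rewrite vec3Z => /vec3_inj [h1 h2 _].
      by move: h1 h2; rewrite mulr1 => <-; rewrite mul0r; move/eqP; rewrite oner_eq0.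
    by rewrite add1n.
  move=> b b' /pt_eq [a]; rewrite vec3Z => /vec3_inj [h1 h2 _].
  by move: h1 h2; rewrite mulr1 => <-; rewrite mul1r.
- apply/subsetP => P /imsetP [[[a b] c]]; rewrite triplesP => /and4P[ha hb hc nz] ->.
  apply/imsetP; exists ((a, c), b); last by rewrite /= combf.
  by rewrite triplesP !(Fsub_sub1 k) //; move: nz; rewrite orbAC.
- move=> j T jn [u [v [z [rf ->]]]] sec piT.
  have [sj Hsj] := frob_rmorph j n0 cF.
  have Kj x : (x \in Fsub F q j) = (sj x == x) by rewrite inE Hsj.
  have hom := om_fix Hsj rf q0 piT sec.
  have sub : Fsub F q k \subset Fsub F q j by apply: hmin => //; rewrite Kj hom.
  apply/subsetP => P /imsetP [[[a b] c]]; rewrite triplesP => /and4P[ha hb hc nz] ->.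
  rewrite /= combf; apply: (S_sub Hsj rf q0 piT) => //; apply/eqP; rewrite -Kj; exact: (subsetP sub).
Qed.
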